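(* Let $c\in\mathbb{N}$, let $\delta>1/c$, and let $\mathrm{ALG}$ be a deterministic algorithm for the Halld\'orsson–Szegedy guessing game such that on inputs where $n=k^c$ the cost of $\mathrm{ALG}$ is at most $O(n^{1-\delta})$. Then $\mathrm{ALG}$ must read at least $b=\Omega(n\log n)$ bits of advice.
   Context: The Halld\'orsson–Szegedy guessing game (HSGG) is the following minimization problem. First integers $k\leq n$ with $k$ even are revealed. Then for $i=1,\dots,n$: a set $A_i\subseteq[k]$ of size $k/2$ (available characters) is revealed; the algorithm answers $y_i\in[n]$ subject to: for every $t<i$ with $y_t=y_i$, $x_t\in A_i$; then the correct character $x_i\in A_i$ is revealed. The cost of the output $y_1\cdots y_n$ is $|\{y_1,\dots,y_n\}|$. Advice is read from an infinite tape prepared by an oracle knowing the whole input. *)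

(* Defs.v *)
From mathcomp Require Import all_boot.
From Stdlib Require Import Reals.
Set Implicit Arguments. Unset Strict Implicit. Unset Printing Implicit Defensive.

(* Rounds are indexed
   0 .. n-1; round i has available set iA i (a subset of [k] = 'I_k) and
   correct character ix i.  Values at indices >= n are irrelevant. *)
Record hsgg_input := HInput {
  ik : nat;
  inn : nat;
  iA : nat -> {set 'I_ik};
  ix : nat -> 'I_ik
}.

Definition valid_input (I : hsgg_input) : Prop :=
  ~~ odd (ik I) /\ ik I <= inn I /\
  forall i, i < inn I -> #|iA I i| = (ik I)./2 /\ ix I i \in iA I i.

Definition tape := nat -> bool.

(* A deterministic online algorithm with advice: given the advice tape, k, n,
   the available sets A_1..A_i revealed so far and the correct characters
   x_1..x_{i-1} revealed so far, it answers y_i (a natural number; validity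
   requires y_i < n, i.e. y_i in [n] up to the shift 1..n -> 0..n-1). *)
Definition hsgg_alg :=
  tape -> forall k n : nat, seq {set 'I_k} -> seq 'I_k -> nat.

Definition answer (alg : hsgg_alg) (I : hsgg_input) (phi : tape) (i : nat) : nat :=
  alg phi (ik I) (inn I) [seq iA I j | j <- iota 0 i.+1] [seq ix I j | j <- iota 0 i].

Definition valid_output (alg : hsgg_alg) (I : hsgg_input) (phi : tape) : Prop :=
  forall i, i < inn I ->
    answer alg I phi i < inn I /\
    forall t, t < i -> answer alg I phi t = answer alg I phi i -> ix I t \in iA I i.

Definition cost (alg : hsgg_alg) (I : hsgg_input) (phi : tape) : nat :=
  size (undup [seq answer alg I phi i | i <- iota 0 (inn I)]).

(* On input I with tape phi the algorithm reads (at most) the first b bits: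
   its whole output is unchanged by any modification of the tape beyond
   position b. *)
Definition reads_within (alg : hsgg_alg) (I : hsgg_input) (phi : tape) (b : nat) : Prop :=
  forall psi : tape, (forall j, j < b -> psi j = phi j) ->
    forall i, i < inn I -> answer alg I psi i = answer alg I phi i.

(* Main.v *)
Require Import Defs.
From mathcomp Require Import all_boot zify.
Set Implicit Arguments. Unset Strict Implicit. Unset Printing Implicit Defensive.

Lemma bin_half_step hh s : s < hh ->
  2 * 'C(hh.*2 - s.+1, hh - s.+1) <= 'C(hh.*2 - s, hh - s).
Proof.
move=> hs.
have := mul_bin_diag (hh.*2 - s) (hh - s.+1).
have -> : (hh.*2 - s).-1 = hh.*2 - s.+1 by lia.
have -> : (hh - s.+1).+1 = hh - s by lia.
move=> E.
have H1 : 2 * (hh - s) <= hh.*2 - s by lia.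
have hpos : 0 < hh - s by lia.
suff: (hh - s) * (2 * 'C(hh.*2 - s.+1, hh - s.+1)) <= (hh - s) * 'C(hh.*2 - s, hh - s) by rewrite leq_pmul2l.
rewrite mulnA (mulnC (hh - s) 2) -E.
by rewrite leq_mul2r H1 orbT.
Qed.

Lemma bin_half hh s : s <= hh -> 2 ^ s * 'C(hh.*2 - s, hh - s) <= 'C(hh.*2, hh).
Proof.
elim: s => [|s IH] hs; first by rewrite expn0 mul1n !subn0.
apply: leq_trans (IH (ltnW hs)).
rewrite expnS -mulnA mulnCA leq_pmul2l ?expn_gt0 //.
exact: bin_half_step.
Qed.

Lemma sup_count k hh (Y : {set 'I_k}) : k = hh.*2 ->
  2 ^ #|Y| * #|[set A : {set 'I_k} | (#|A| == hh) && (Y \subset A)]| <= 'C(k, hh).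
Proof.
move=> hk.
set S := [set A : {set 'I_k} | _].
case: (leqP #|Y| hh) => hY; last first.
  suff -> : S = set0 by rewrite cards0 muln0.
  apply/setP=> A; rewrite !inE; apply/negP=> /andP[/eqP hA hsub].
  by have := subset_leq_card hsub; rewrite hA leqNgt hY.
have -> : #|S| = #|[set A :\: Y | A in S]|.
  rewrite card_in_imset //.
  move=> A B; rewrite !inE => /andP[_ hA] /andP[_ hB] E.
  by rewrite -(setID A Y) -(setID B Y) (setIidPr hA) (setIidPr hB) E.
apply: leq_trans (_ : 2 ^ #|Y| * 'C(#|~: Y|, hh - #|Y|) <= _).
  rewrite leq_mul2l; apply/orP; right.
  rewrite -cards_draws; apply: subset_leq_card; apply/subsetP=> B /imsetP[A].
  rewrite /S inE => /andP[/eqP hA hsub] ->.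
  rewrite inE; apply/andP; split.
    by apply/subsetP=> x; rewrite !inE => /andP[].
  by rewrite (cardsDS hsub) hA.
have -> : #|~: Y| = hh.*2 - #|Y| by have := cardsC Y; rewrite card_ord; lia.
by have := bin_half hY; rewrite -hk.
Qed.

Definition RT k := ({set 'I_k} * 'I_k)%type.
Definition rvalid k hh (r : RT k) : bool := (#|r.1| == hh) && (r.2 \in r.1).
Definition algo k := seq (RT k) -> {set 'I_k} -> nat.

Definition lab k (D : algo k) (r0 : RT k) (h : seq (RT k)) (t : nat) : nat :=
  D (take t h) (nth r0 h t).1.

Definition Xc k (D : algo k) r0 (h : seq (RT k)) (j : nat) : {set 'I_k} :=
  [set x | has (fun u => (lab D r0 h u == j) && ((nth r0 h u).2 == x)) (iota 0 (size h))].

Definition hvalid k (D : algo k) r0 h :=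
  all (fun t => Xc D r0 (take t h) (lab D r0 h t) \subset (nth r0 h t).1) (iota 0 (size h)).

Definition badr k T (D : algo k) r0 h t :=
  ~~ ((#|Xc D r0 (take t h) (lab D r0 h t)| < T) &&
      ((nth r0 h t).2 \notin Xc D r0 (take t h) (lab D r0 h t))).

Definition nbad k T (D : algo k) r0 h := count (badr T D r0 h) (iota 0 (size h)).

Definition Phi k T b (D : algo k) r0 h := hvalid D r0 h * b ^ nbad T D r0 h.

Lemma lab_take k (D : algo k) r0 h t u : u < t -> lab D r0 (take t h) u = lab D r0 h u.
Proof. by move=> ut; rewrite /lab (take_takel _ (ltnW ut)) (nth_take _ ut). Qed.

Lemma XcP k (D : algo k) r0 h j x :
  reflect (exists2 u, u < size h & (lab D r0 h u = j) /\ ((nth r0 h u).2 = x))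
          (x \in Xc D r0 h j).
Proof.
rewrite inE; apply: (iffP hasP) => [[u]|[u hu [h1 h2]]].
  by rewrite mem_iota add0n => /andP[_ hu] /andP[/eqP h1 /eqP h2]; exists u.
by exists u; rewrite ?mem_iota ?add0n ?hu ?h1 ?h2 ?eqxx.
Qed.

Lemma XctP k (D : algo k) r0 h t j x :
  reflect (exists2 u, (u < t) && (u < size h) & (lab D r0 h u = j) /\ ((nth r0 h u).2 = x))
          (x \in Xc D r0 (take t h) j).
Proof.
apply: (iffP (XcP _ _ _ _ _)) => [[u]|[u]].
  rewrite size_take_min leq_min => /andP[ut uh] [h1 h2].
  exists u; first by rewrite ut uh.
  by rewrite -(lab_take D r0 h ut) -(nth_take r0 ut).
move=> /andP[ut uh] [h1 h2].
exists u; first by rewrite size_take_min leq_min ut uh.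
by rewrite (lab_take D r0 h ut) (nth_take r0 ut).
Qed.

Lemma lab_rcons k (D : algo k) r0 h r t : t < size h ->
  lab D r0 (rcons h r) t = lab D r0 h t.
Proof.
move=> th; rewrite /lab nth_rcons th -cats1 take_cat th //.
Qed.

Lemma lab_rcons_last k (D : algo k) r0 h r :
  lab D r0 (rcons h r) (size h) = D h r.1.
Proof. by rewrite /lab nth_rcons ltnn eqxx -cats1 take_cat ltnn subnn take0 cats0. Qed.

Lemma take_rcons_le k (h : seq (RT k)) r t : t <= size h -> take t (rcons h r) = take t h.
Proof.
move=> th; rewrite -cats1 take_cat; case: ltnP => // ht.
have -> : t = size h by apply/eqP; rewrite eqn_leq th ht.
by rewrite subnn take0 cats0 take_size.
Qed.

Lemma iotaS0 n : iota 0 n.+1 = rcons (iota 0 n) n.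
Proof. by rewrite -addn1 iotaD add0n cats1. Qed.

Lemma hvalid_rcons k (D : algo k) r0 h r :
  hvalid D r0 (rcons h r) = hvalid D r0 h && (Xc D r0 h (D h r.1) \subset r.1).
Proof.
rewrite /hvalid size_rcons iotaS0 all_rcons andbC.
rewrite take_rcons_le // take_size lab_rcons_last nth_rcons ltnn eqxx; congr andb.
apply: eq_in_all => t; rewrite mem_iota add0n => /andP[_ th].
by rewrite (take_rcons_le _ (ltnW th)) (lab_rcons _ _ _ th) nth_rcons th.
Qed.

Lemma nbad_rcons k T (D : algo k) r0 h r :
  nbad T D r0 (rcons h r) = nbad T D r0 h +
    ~~ ((#|Xc D r0 h (D h r.1)| < T) && (r.2 \notin Xc D r0 h (D h r.1))).
Proof.
rewrite /nbad size_rcons iotaS0 -[rcons (iota _ _) _]cats1 count_cat /= addn0; congr addn.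
  apply: eq_in_count => t; rewrite mem_iota add0n => /andP[_ th].
  by rewrite /badr (take_rcons_le _ (ltnW th)) (lab_rcons _ _ _ th) nth_rcons th.
by rewrite /badr take_rcons_le // take_size lab_rcons_last nth_rcons ltnn eqxx.
Qed.

Lemma sum_rvalid k hh : k = hh.*2 ->
  \sum_(r : RT k | rvalid hh r) 1 = hh * 'C(k, hh).
Proof.
move=> hk.
rewrite /rvalid -(pair_big_dep (fun A : {set 'I_k} => #|A| == hh) (fun A x => x \in A) (fun _ _ => 1)) /=.
rewrite (eq_bigr (fun _ => hh)); last by move=> A /eqP <-; rewrite sum1_card.
by rewrite sum_nat_const -cardsE card_draws card_ord mulnC.
Qed.

Lemma sum_in_le k (A X : {set 'I_k}) :
  \sum_(x | x \in A) (x \in X : nat) <= #|X|.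
Proof.
rewrite -sum1_card big_mkcond [X in _ <= X]big_mkcond /=.
by apply: leq_sum => x _; case: (x \in A); case: (x \in X).
Qed.

Lemma cnt_bound k hh T b (D : algo k) r0 h :
  k = hh.*2 -> 0 < T -> 2 * size h * b <= 2 ^ T -> 2 * T * b <= hh ->
  b * (\sum_(r : RT k | rvalid hh r)
        ((Xc D r0 h (D h r.1) \subset r.1) &&
         ~~ ((#|Xc D r0 h (D h r.1)| < T) && (r.2 \notin Xc D r0 h (D h r.1)))) : nat)
  <= hh * 'C(k, hh).
Proof.
move=> hk T0 hb1 hb2.
set X := fun A => Xc D r0 h (D h A).
set g := fun A : {set 'I_k} => ((T <= #|X A|) && (X A \subset A) : nat).
rewrite /rvalid -(pair_big_dep (fun A : {set 'I_k} => #|A| == hh) (fun A x => x \in A)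
   (fun A x => ((X A \subset A) && ~~ ((#|X A| < T) && (x \notin X A)) : nat))) /=.
have inner : forall A : {set 'I_k}, #|A| == hh ->
    \sum_(x | x \in A) ((X A \subset A) && ~~ ((#|X A| < T) && (x \notin X A)) : nat)
    <= hh * g A + T.
  move=> A /eqP hA; rewrite /g.
  case: (leqP T #|X A|) => hT /=.
    rewrite (eq_bigr (fun _ => (X A \subset A : nat))); last by move=> x _; rewrite andbT.
    by rewrite sum_nat_const -hA mulnC leq_addr.
  apply: leq_trans (_ : \sum_(x | x \in A) (x \in X A : nat) <= _).
    by apply: leq_sum => x _; case: (X A \subset A); case: (x \in X A).
  by rewrite ?muln0 ?mul0n add0n; apply: leq_trans (sum_in_le A (X A)) (ltnW hT).
apply: (@leq_trans (b * \sum_(A : {set 'I_k} | #|A| == hh) (hh * g A + T))).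
  by rewrite leq_mul2l; apply/orP; right; apply: leq_sum.
rewrite big_split /= sum_nat_const -cardsE card_draws card_ord -big_distrr /=.
set G := \sum_(A | _) g A.
set L := undup [seq lab D r0 h u | u <- iota 0 (size h)].
have hG : G <= \sum_(j <- L) \sum_(A : {set 'I_k} | #|A| == hh)
           ((T <= #|Xc D r0 h j|) && (Xc D r0 h j \subset A) : nat).
  rewrite exchange_big /=; apply: leq_sum => A _.
  rewrite /g; case: (boolP ((T <= #|X A|) && (X A \subset A))) => //= /andP[hT hsub].
  have : X A != set0 by rewrite -card_gt0; apply: leq_trans hT.
  case/set0Pn=> x /XcP[u hu [hl _]].
  have hin : D h A \in L.
    by rewrite mem_undup; apply/mapP; exists u; rewrite ?mem_iota ?add0n.
  rewrite (bigD1_seq _ hin (undup_uniq _)) /=.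
  by rewrite -/(X A) hT hsub.
have hG2 : 2 ^ T * G <= size h * 'C(k, hh).
  apply: leq_trans (_ : 2 ^ T * \sum_(j <- L) \sum_(A : {set 'I_k} | #|A| == hh)
           ((T <= #|Xc D r0 h j|) && (Xc D r0 h j \subset A) : nat) <= _).
    by rewrite leq_mul2l hG orbT.
  rewrite big_distrr /=.
  apply: leq_trans (_ : \sum_(j <- L) 'C(k, hh) <= _); last first.
    rewrite big_const_seq count_predT iter_addn_0 mulnC leq_mul2r; apply/orP; right.
    by apply: leq_trans (size_undup _) _; rewrite size_map size_iota.
  apply: leq_sum => j _.
  case: (leqP T #|Xc D r0 h j|) => hT; last first.
    by rewrite big1 ?muln0 // => A _; rewrite leqNgt hT.
  rewrite (_ : \sum_(A : {set 'I_k} | #|A| == hh) _ =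
     #|[set A : {set 'I_k} | (#|A| == hh) && (Xc D r0 h j \subset A)]|); last first.
    rewrite -sum1_card big_mkcond [RHS]big_mkcond; apply: eq_bigr => A _.
    by rewrite inE; case: (#|A| == hh); case: (Xc D r0 h j \subset A).
  apply: leq_trans (sup_count (Xc D r0 h j) hk).
  by rewrite leq_mul2r leq_pexp2l ?orbT.
have e1 : 2 * b * G <= 'C(k, hh).
  have p2 : 0 < 2 ^ T by rewrite expn_gt0.
  rewrite -(leq_pmul2l p2).
  apply: leq_trans (_ : 2 * b * (size h * 'C(k, hh)) <= _).
    by rewrite mulnCA leq_mul2l hG2 orbT.
  by rewrite mulnA [2 * b * _]mulnC mulnA leq_mul2r (mulnC _ 2) hb1 orbT.
rewrite mulnDr.
have e2 : 2 * (b * (hh * G)) <= hh * 'C(k, hh).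
  by rewrite mulnA mulnA (mulnC _ hh) -!mulnA leq_mul2l mulnA e1 orbT.
have e3 : 2 * (b * ('C(k, hh) * T)) <= hh * 'C(k, hh).
  by rewrite (mulnC 'C(k, hh)) mulnA mulnA leq_mul2r -mulnA (mulnC b) mulnA hb2 orbT.
lia.
Qed.

Lemma Phi_step k hh T b (D : algo k) r0 h :
  k = hh.*2 -> 0 < T -> 0 < b -> 2 * size h * b <= 2 ^ T -> 2 * T * b <= hh ->
  \sum_(r : RT k | rvalid hh r) Phi T b D r0 (rcons h r)
    <= 2 * (hh * 'C(k, hh)) * Phi T b D r0 h.
Proof.
move=> hk T0 b0 hb1 hb2.
rewrite /Phi.
case hv: (hvalid D r0 h); last first.
  by rewrite big1 // => r _; rewrite hvalid_rcons hv.
set X := fun A => Xc D r0 h (D h A).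
set f := fun r : RT k => ((X r.1 \subset r.1) &&
         ~~ ((#|X r.1| < T) && (r.2 \notin X r.1)) : nat).
apply: (@leq_trans (\sum_(r : RT k | rvalid hh r) b ^ nbad T D r0 h * (1 + b * f r))).
  apply: leq_sum => r _.
  rewrite hvalid_rcons hv nbad_rcons expnD /= -/(X r.1) /f.
  case: (X r.1 \subset r.1) => /=; last by rewrite mul0n.
  rewrite mul1n leq_mul2l; apply/orP; right.
  by case: (~~ _) => /=; rewrite ?muln1 ?expn1 ?expn0 ?muln0 ?addn0 ?add1n ?leqnSn.
rewrite -big_distrr /= big_split /= -big_distrr /=.
rewrite mul1n [X in _ <= X]mulnC leq_mul2l; apply/orP; right.
have hc : b * \sum_(r : RT k | rvalid hh r) f r <= hh * 'C(k, hh) := cnt_bound D r0 hk T0 hb1 hb2.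
rewrite sum_rvalid // mul2n -addnn leq_add2l.
exact: hc.
Qed.

Fixpoint allseqs k hh (n : nat) : seq (seq (RT k)) :=
  if n is n'.+1 then
    [seq rcons p.1 p.2 | p <- [seq (x, y) | x <- allseqs k hh n', y <- enum (rvalid hh)]]
  else [:: [::]].

Lemma allseqs_prop k hh n h : h \in allseqs k hh n -> size h = n /\ all (rvalid hh) h.
Proof.
elim: n h => [|n IH] h /=; first by rewrite inE => /eqP ->.
case/mapP=> p /allpairsP[[x y] /= [hx hy ->]] ->.
have [hs ha] := IH _ hx.
by rewrite size_rcons hs all_rcons ha andbT; move: hy; rewrite mem_enum.
Qed.

Lemma size_allseqs k hh n : size (allseqs k hh n) = #|rvalid hh : {pred RT k}| ^ n.
Proof.
elim: n => [|n IH] //=.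
by rewrite size_map size_allpairs IH -cardE expnS mulnC.
Qed.

Lemma sum_allseqs k hh T b (D : algo k) r0 n i :
  k = hh.*2 -> 0 < T -> 0 < b -> 2 * n * b <= 2 ^ T -> 2 * T * b <= hh -> i <= n ->
  \sum_(h <- allseqs k hh i) Phi T b D r0 h <= (2 * (hh * 'C(k, hh))) ^ i.
Proof.
move=> hk T0 b0 hb1 hb2.
elim: i => [|i IH] hi.
  by rewrite /= big_seq1 /Phi /hvalid /nbad /= muln1.
rewrite /= big_map big_allpairs expnS.
apply: (@leq_trans (\sum_(h <- allseqs k hh i) 2 * (hh * 'C(k, hh)) * Phi T b D r0 h)).
  rewrite big_seq_cond [X in _ <= X]big_seq_cond.
  apply: leq_sum => h /andP[hin _].
  have [hs _] := allseqs_prop hin.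
  rewrite big_enum /=.
  apply: Phi_step => //.
  apply: leq_trans hb1; rewrite hs leq_mul2r leq_mul2l; apply/orP; right.
  by apply/orP; right; apply: ltnW.
rewrite -big_distrr /= leq_mul2l; apply/orP; right.
exact: IH (ltnW hi).
Qed.

Lemma Xc_grow k (D : algo k) r0 h t t' :
  t < t' -> t < size h -> lab D r0 h t = lab D r0 h t' ->
  (nth r0 h t).2 \notin Xc D r0 (take t h) (lab D r0 h t) ->
  #|Xc D r0 (take t h) (lab D r0 h t)| < #|Xc D r0 (take t' h) (lab D r0 h t')|.
Proof.
move=> tt' th el hn.
apply: proper_card; apply/properP; split.
  apply/subsetP=> x /XctP[u /andP[ut uh] [hl hx]].
  apply/XctP; exists u; last by rewrite -el.
  by rewrite uh (ltn_trans ut tt').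
exists (nth r0 h t).2 => //.
by apply/XctP; exists t; rewrite ?tt' ?th.
Qed.

Lemma nfree_bound k T (D : algo k) r0 h :
  count (predC (badr T D r0 h)) (iota 0 (size h)) <=
  size (undup [seq lab D r0 h t | t <- iota 0 (size h)]) * T.
Proof.
set L := [seq lab D r0 h t | t <- iota 0 (size h)].
set f := fun t => (lab D r0 h t, #|Xc D r0 (take t h) (lab D r0 h t)|).
rewrite -size_filter -(size_map f).
apply: (@leq_trans (size [seq (x, y) | x <- undup L, y <- iota 0 T])); last first.
  by rewrite size_allpairs size_iota.
apply: uniq_leq_size.
  rewrite map_inj_in_uniq ?filter_uniq ?iota_uniq //.
  move=> t t'; rewrite !mem_filter !mem_iota /= /badr !negbK !add0n.
  move=> /andP[/andP[_ ft] ht] /andP[/andP[_ ft'] ht'] [el es].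
  case: (ltngtP t t') => // hlt.
    by have := Xc_grow hlt ht el ft; rewrite es ltnn.
  by have := Xc_grow hlt ht' (esym el) ft'; rewrite -es ltnn.
move=> z /mapP[t]; rewrite mem_filter mem_iota /= /badr negbK add0n => /andP[/andP[fT _] ht] ->.
apply/allpairsP; exists (f t); split => //.
  by rewrite mem_undup; apply/mapP; exists t; rewrite ?mem_iota.
by rewrite mem_iota.
Qed.

Lemma nbad_lower k T (D : algo k) r0 h :
  size h - size (undup [seq lab D r0 h t | t <- iota 0 (size h)]) * T <= nbad T D r0 h.
Proof.
have := nfree_bound T D r0 h.
have := count_predC (badr T D r0 h) (iota 0 (size h)).
rewrite size_iota /nbad; lia.
Qed.

Lemma counting k hh T b (S : finType) (Ds : S -> algo k) r0 n q :
  k = hh.*2 -> 0 < hh -> 0 < T -> 0 < b -> 2 * n * b <= 2 ^ T -> 2 * T * b <= hh ->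
  (forall h, size h = n -> all (rvalid hh) h ->
     exists s, hvalid (Ds s) r0 h /\ q <= nbad T (Ds s) r0 h) ->
  b ^ q <= 2 ^ n * #|S|.
Proof.
move=> hk hh0 T0 b0 hb1 hb2 hyp.
set N := hh * 'C(k, hh).
have N0 : 0 < N by rewrite muln_gt0 hh0 bin_gt0 hk -addnn leq_addr.
have cardN : #|rvalid hh : {pred RT k}| = N.
  by rewrite -sum1_card /N -(sum_rvalid hk).
have up : \sum_(h <- allseqs k hh n) \sum_(s : S) Phi T b (Ds s) r0 h <= #|S| * (2 * N) ^ n.
  rewrite exchange_big /=.
  apply: leq_trans (_ : \sum_(s : S) (2 * N) ^ n <= _); last by rewrite sum_nat_const.
  by apply: leq_sum => s _; exact: (sum_allseqs (Ds s) r0 hk T0 b0 hb1 hb2 (leqnn n)).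
have lo : \sum_(h <- allseqs k hh n) b ^ q <= \sum_(h <- allseqs k hh n) \sum_(s : S) Phi T b (Ds s) r0 h.
  rewrite big_seq_cond [X in _ <= X]big_seq_cond; apply: leq_sum => h /andP[hin _].
  have [hs ha] := allseqs_prop hin.
  have [s [hv hq]] := hyp h hs ha.
  rewrite (bigD1 s) //=; apply: leq_trans (leq_addr _ _).
  by rewrite /Phi hv mul1n leq_pexp2l.
have := leq_trans lo up.
rewrite big_const_seq count_predT iter_addn_0 size_allseqs cardN expnMn.
by rewrite mulnA (mulnC #|S|) leq_pmul2r ?expn_gt0 ?N0.
Qed.
Lemma lin_exp e j : 2 * e + 2 <= j -> j.+1 * e <= 2 ^ j.
Proof.
elim: j => [|j IH]; first by lia.
rewrite leq_eqVlt => /orP[/eqP <- | hj].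
  have h1 : (e.+1) ^ 2 <= (2 ^ e) ^ 2 by rewrite leq_exp2r // ltn_expl.
  rewrite -expnM mulnC in h1.
  have -> : 2 ^ (2 * e + 2) = 4 * 2 ^ (2 * e) by rewrite expnD mulnC.
  move: h1; rewrite (expnS _ 1) expn1; generalize (2 ^ (2 * e)) => P.
  nia.
have := IH hj; rewrite expnS; generalize (2 ^ j) => P; nia.
Qed.
Lemma leq_expr m n e : m <= n -> m ^ e <= n ^ e.
Proof. by move=> mn; elim: e => // e IH; rewrite !expnS leq_mul. Qed.

Lemma poly_exp e r : 2 ^ (2 * e + 2) <= r -> r ^ e <= 2 ^ r.
Proof.
move=> hr.
have r0 : 0 < r by apply: leq_trans _ hr; rewrite expn_gt0.
set j := trunc_log 2 r.
have h1 := trunc_logP (isT : 1 < 2) r0.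
have h2 := trunc_log_ltn r (isT : 1 < 2).
have hj : 2 * e + 2 <= j.
  have : 2 ^ (2 * e + 2) < 2 ^ j.+1 by apply: leq_ltn_trans hr h2.
  by rewrite ltn_exp2l.
apply: leq_trans (_ : (2 ^ j.+1) ^ e <= _).
  by apply: leq_expr; apply: ltnW.
rewrite -expnM leq_exp2l //.
apply: leq_trans (lin_exp hj) h1.
Qed.

Lemma poly_exp1 e r : 2 ^ (4 * e + 2) <= r -> r.+1 ^ e <= 2 ^ r.
Proof.
move=> hr.
have r2 : 2 <= r.
  apply: leq_trans _ hr; rewrite -[2]/(2 ^ 1) leq_exp2l //; lia.
apply: leq_trans (_ : r ^ (2 * e) <= _); last first.
  apply: poly_exp; apply: leq_trans _ hr; rewrite leq_exp2l //; lia.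
rewrite expnM; apply: leq_expr.
rewrite (expnS _ 1) expn1; nia.
Qed.

Lemma root4_ex k : exists r, r ^ 4 <= k < r.+1 ^ 4.
Proof.
elim: k => [|k [r /andP[h1 h2]]]; first by exists 0.
case: (ltnP k.+1 (r.+1 ^ 4)) => h3.
  by exists r; rewrite h3 (leq_trans h1).
exists r.+1; rewrite h3 /=.
have : r.+1 ^ 4 < r.+2 ^ 4 by rewrite ltn_exp2r.
lia.
Qed.

Definition tape_of B (s : {ffun 'I_B -> bool}) : tape :=
  fun j => if insub j is Some o then s o else false.

Lemma tape_of_ffun B (phi : tape) j : j < B -> tape_of [ffun o : 'I_B => phi (val o)] j = phi j.
Proof. by move=> jB; rewrite /tape_of insubT /= ffunE. Qed.

Definition Dalg (alg : hsgg_alg) k n B (s : {ffun 'I_B -> bool}) : algo k :=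
  fun h A => alg (tape_of s) k n (rcons (map fst h) A) (map snd h).

Definition input_of k n (r0 : RT k) (h : seq (RT k)) : hsgg_input :=
  HInput n (fun i => (nth r0 h i).1) (fun i => (nth r0 h i).2).

Lemma answer_lab (alg : hsgg_alg) k n B (s : {ffun 'I_B -> bool}) (r0 : RT k) (h : seq (RT k)) t :
  t < size h ->
  answer alg (input_of n r0 h) (tape_of s) t = lab (Dalg alg n s) r0 h t.
Proof.
move=> th.
rewrite /answer /lab /Dalg iotaS0 map_rcons /input_of; cbn [iA ix ik inn].
have e1 : forall (T : Type) (f : RT k -> T),
    [seq f (nth r0 h j) | j <- iota 0 t] = map f (take t h).
  by move=> T f; rewrite -(map_nth_iota0 r0 (ltnW th)) -map_comp.
by rewrite (e1 _ fst) (e1 _ snd).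
Qed.

Lemma bridge (alg : hsgg_alg) (oracle : hsgg_input -> tape) k n M r B :
  ~~ odd k -> 0 < k -> k <= n -> 0 < r ->
  2 * n * r <= 2 ^ r -> 2 * r * r <= k./2 ->
  (forall I, valid_input I -> valid_output alg I (oracle I)) ->
  (forall I, valid_input I -> ik I = k -> inn I = n -> cost alg I (oracle I) <= M) ->
  (forall I, valid_input I -> ik I = k -> inn I = n ->
     exists b, reads_within alg I (oracle I) b /\ b <= B) ->
  r ^ (n - M * r) <= 2 ^ n * 2 ^ B.
Proof.
move=> ek k0 kn r0 hb1 hb2 Hval Hcost Hread.
have [k' ek'] : exists k', k = k'.+1 by exists k.-1; rewrite prednK.
subst k.
set hh := k'.+1./2.
have hk : k'.+1 = hh.*2 by rewrite even_halfK.
have hh0 : 0 < hh by move: hk k0; case: hh => //.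
set rr0 : RT k'.+1 := (set0, ord0).
have := @counting k'.+1 hh r r _ (Dalg alg n (B:=B)) rr0 n (n - M * r) hk hh0 r0 r0 hb1 hb2.
rewrite card_ffun card_bool card_ord; apply.
move=> h hs ha.
set I := input_of n rr0 h.
have vI : valid_input I.
  split=> //; split=> // i; rewrite /= => hi.
  have := (all_nthP rr0 ha) i; rewrite hs => /(_ hi) /andP[/eqP -> ->]; by split.
have [b [hrb hbB]] := Hread I vI erefl erefl.
set s := [ffun o : 'I_B => oracle I (val o)].
exists s.
have Hans : forall t, t < n -> answer alg I (oracle I) t = lab (Dalg alg n s) rr0 h t.
  move=> t tn; rewrite -(@answer_lab alg _ n _ s rr0 h t); last by rewrite hs.
  symmetry; apply: hrb => // j jb; apply: tape_of_ffun; exact: leq_trans jb hbB.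
split.
  apply/allP => t; rewrite mem_iota add0n hs => /andP[_ tn].
  apply/subsetP=> x /XctP[u /andP[ut uh] [hl hx]].
  have [_ hv] := Hval I vI t tn.
  have := hv u ut.
  rewrite (Hans u (ltn_trans ut tn)) (Hans t tn) hl /= => /(_ erefl).
  by rewrite hx.
apply: leq_trans (nbad_lower _ _ _ _).
rewrite hs leq_sub2l // leq_mul2r; apply/orP; right.
apply: leq_trans (Hcost I vI erefl erefl).
rewrite /cost /=.
have -> // : [seq answer alg I (oracle I) i | i <- iota 0 n] = [seq lab (Dalg alg n s) rr0 h t | t <- iota 0 n].
by apply/eq_in_map => t; rewrite mem_iota add0n => /andP[_ tn]; exact: Hans.
Qed.
Lemma params c M k r : 0 < c -> 2 ^ (4 * (4 * c + 2) + 2) <= r -> 2 * M <= r -> 2 <= r ->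
  r ^ 4 <= k < r.+1 ^ 4 -> ~~ odd k ->
  [/\ 2 * k ^ c * r <= 2 ^ r, 2 * r * r <= k./2,
      2 * (M * k ^ (c - 1) * r) <= k ^ c & k <= 16 * r ^ 4].
Proof.
move=> c0 hr1 hr2 hr3 /andP[hk1 hk2] ek.
have r4 : 4 * (r * r) <= r ^ 4.
  have : 2 * 2 <= r * r by apply: leq_mul.
  rewrite (_ : r ^ 4 = (r * r) * (r * r)); last by rewrite !expnS expn0 muln1 !mulnA.
  move=> h; rewrite leq_mul2r h orbT //.
have hk16 : k <= 16 * r ^ 4.
  apply: leq_trans (ltnW hk2) _.
  rewrite (_ : 16 * r ^ 4 = (2 * r) ^ 4); last by rewrite expnMn.
  by apply: leq_expr; lia.
split => //.
- apply: leq_trans (_ : r.+1 ^ (4 * c + 2) <= _); last exact: poly_exp1.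
  have -> : 2 * k ^ c * r = k ^ c * (2 * r) by rewrite [2 * _]mulnC -mulnA.
  rewrite expnD; apply: leq_mul.
    rewrite expnM; apply: leq_expr; exact: ltnW.
  rewrite (expnS _ 1) expn1; nia.
- have := even_halfK ek.
  have := leq_trans r4 hk1.
  lia.
- have [c' ->] : exists c', c = c'.+1 by exists c.-1; rewrite prednK.
  rewrite subSS subn0 expnS.
  have h2 : 2 * M * r <= k.
    apply: leq_trans (leq_trans r4 hk1).
    have : 2 * M * r <= r * r by rewrite leq_mul2r hr2 orbT.
    lia.
  move: h2; generalize (k ^ c') => P; nia.
Qed.

Lemma final_nat k r q n B : k <= 16 * r ^ 4 -> n <= 2 * q -> q <= n -> 0 < k ->
  r ^ q <= 2 ^ n * 2 ^ B -> k ^ n <= 2 ^ (16 * n + 8 * B).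
Proof.
move=> hk hnq hq k0 hr.
apply: leq_trans (_ : k ^ (2 * q) <= _); first by rewrite leq_pexp2l.
apply: leq_trans (_ : (16 * r ^ 4) ^ (2 * q) <= _); first exact: leq_expr.
have -> : (16 * r ^ 4) ^ (2 * q) = 2 ^ (8 * q) * (r ^ q) ^ 8.
  rewrite expnMn -[16]/(2 ^ 4) -!expnM; congr (_ * _); congr (_ ^ _); lia.
apply: leq_trans (_ : 2 ^ (8 * q) * (2 ^ n * 2 ^ B) ^ 8 <= _).
  rewrite leq_mul2l; apply/orP; right; exact: leq_expr.
rewrite -!expnD -expnM -expnD leq_exp2l //; lia.
Qed.
Lemma powE a b : Nat.pow a b = expn a b.
Proof. elim: b => //= b IH. by rewrite IH expnS. Qed.

From Stdlib Require Import Reals Lra Classical.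
From Stdlib Require ZArith.

Lemma ln_le' (x y : R) : (0 < x)%R -> (x <= y)%R -> (ln x <= ln y)%R.
Proof.
move=> x0 xy; case: (Rle_lt_or_eq_dec _ _ xy) => h.
  by apply: Rlt_le; apply: ln_increasing.
by rewrite h; apply: Rle_refl.
Qed.

Lemma nat_ceil (x : R) : (0 <= x)%R -> exists B : nat, (x < INR B)%R /\ (INR B <= x + 1)%R.
Proof.
move=> x0; have [h1 h2] := archimed x.
have z0 : (0 <= up x)%Z.
  apply: BinInt.Z.lt_le_incl; apply: lt_0_IZR; lra.
exists (Z.to_nat (up x)); rewrite INR_IZR_INZ Znat.Z2Nat.id //; lra.
Qed.

Lemma nat_above (x : R) : exists m : nat, (x < INR m)%R.
Proof.
have [B [hB _]] := nat_ceil (Rmax_r x 0 : (0 <= Rmax x 0)%R).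
exists B; apply: Rle_lt_trans hB; apply: Rmax_l.
Qed.

Lemma cost_conv (c k cst M : nat) (K delta : R) : (0 < c)%N -> (0 < k)%N ->
  (delta > 1 / INR c)%R -> (K <= INR M)%R -> (0 < K)%R ->
  (INR cst <= K * Rpower (INR (Nat.pow k c)) (1 - delta))%R -> (cst <= M * expn k (c - 1))%N.
Proof.
move=> c0 k0 hd hM K0 hc.
have kR : (1 <= INR k)%R by apply: (le_INR 1); apply/leP.
have [c' ec] : exists c', c = c'.+1 by exists c.-1; rewrite prednK.
subst c.
have cR : (0 < INR c'.+1)%R by apply: lt_0_INR; lia.
have e1 : (Rpower (INR (Nat.pow k c'.+1)) (1 - delta) <= INR k ^ c')%R.
  rewrite pow_INR.
  apply: Rle_trans (_ : (Rpower (INR k ^ c'.+1) (1 - / INR c'.+1) <= _)%R).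
    apply: Rle_Rpower; first exact: pow_R1_Rle.
    move: hd; rewrite /Rdiv Rmult_1_l; lra.
  rewrite -Rpower_pow ?Rpower_mult; last lra.
  have -> : (INR c'.+1 * (1 - / INR c'.+1) = INR c')%R.
    rewrite S_INR; field; rewrite -S_INR; lra.
  rewrite Rpower_pow; [apply: Rle_refl | lra].
apply/leP; apply: INR_le.
rewrite subSS subn0 -multE mult_INR -powE pow_INR.
apply: Rle_trans hc _.
apply: Rle_trans (_ : (K * INR k ^ c' <= _)%R).
  apply: Rmult_le_compat_l; lra.
apply: Rmult_le_compat_r; last lra.
apply: pow_le; lra.
Qed.

Unset Implicit Arguments.

Theorem theorem14 (c : nat) (delta : R) (alg : hsgg_alg)
    (oracle : hsgg_input -> tape) :
  (0 < c)%N ->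
  (delta > 1 / INR c)%R ->
  (forall I, valid_input I -> valid_output alg I (oracle I)) ->
  (exists K : R, exists N0 : nat, (0 < K)%R /\
     forall I, valid_input I -> inn I = (ik I ^ c)%N -> (N0 <= inn I)%N ->
       (INR (cost alg I (oracle I)) <= K * Rpower (INR (inn I)) (1 - delta))%R) ->
  exists C : R, exists N1 : nat, (0 < C)%R /\
    forall k n : nat, ~~ odd k -> n = (k ^ c)%N -> (N1 <= n)%N ->
      exists I, valid_input I /\ ik I = k /\ inn I = n /\
        forall b : nat, reads_within alg I (oracle I) b ->
          (C * INR n * ln (INR n) <= INR b)%R.
Proof.
move=> c0 hdel Hval [K [N0 [K0 Hcost]]].
have [M hM] := nat_above K.
set e := (4 * (4 * c + 2) + 2)%N.
set R0 := maxn (expn 2 e) (maxn (2 * M) 2).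
have [kL hkL] := nat_above (exp 48).
set kmin := maxn (maxn N0 (expn R0.+1 4)) (maxn kL 2).
have cR : (0 < INR c)%R by apply: lt_0_INR; apply/ltP.
exists (/ (16 * INR c))%R, (expn kmin c).
split; first by apply: Rinv_0_lt_compat; lra.
move=> k n ek hn hN1.
rewrite powE in hn.
have hk : (kmin <= k)%N.
  rewrite leqNgt; apply/negP => hlt.
  by move: hN1; rewrite hn leqNgt (ltn_exp2r _ _ c0) hlt.
move: hk; rewrite /kmin !geq_max => /andP[/andP[hkN0 hkR] /andP[hkL' hk2]].
have k0 : (0 < k)%N by apply: leq_trans hk2.
have [r /andP[hr1 hr2]] := root4_ex k.
have hrR : (R0 <= r)%N.
  have : (expn R0.+1 4 < expn r.+1 4)%N by apply: leq_ltn_trans hkR hr2.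
  by rewrite ltn_exp2r // ltnS => /ltnW.
move: hrR; rewrite /R0 !geq_max => /andP[he /andP[hM2 hr2']].
have [hp1 hp2 hp3 hp4] := params c0 he hM2 hr2' (introT andP (conj hr1 hr2)) ek.
have kn : (k <= n)%N by rewrite hn -{1}(expn1 k) leq_pexp2l.
have n0 : (0 < n)%N by apply: leq_trans kn.
set x := (/ (16 * INR c) * INR n * ln (INR n))%R.
case: (classic (exists I, valid_input I /\ ik I = k /\ inn I = n /\
        forall b : nat, reads_within alg I (oracle I) b -> (x <= INR b)%R)) => [//|Hno].
exfalso.
have nR : (1 <= INR n)%R by apply: (le_INR 1); apply/leP.
have x0 : (0 <= x)%R.
  rewrite /x; apply: Rmult_le_pos; last by rewrite -ln_1; apply: ln_le'; lra.
  apply: Rmult_le_pos; last lra.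
  by apply: Rlt_le; apply: Rinv_0_lt_compat; lra.
have [B [hB1 hB2]] := nat_ceil x0.
have Hread : forall I, valid_input I -> ik I = k -> inn I = n ->
    exists b, reads_within alg I (oracle I) b /\ (b <= B)%N.
  move=> I vI hI1 hI2.
  apply: NNPP => Hb; apply: Hno; exists I; do 3 (split => //).
  move=> b hb; apply: Rnot_lt_le => hlt; apply: Hb; exists b; split => //.
  apply/ltnW/ltP; apply: INR_lt; lra.
have Hc : forall I, valid_input I -> ik I = k -> inn I = n ->
    (cost alg I (oracle I) <= M * expn k (c - 1))%N.
  move=> I vI hI1 hI2.
  apply: (cost_conv c0 k0 hdel (Rlt_le _ _ hM) K0).
  have -> : Nat.pow k c = inn I by rewrite hI2 hn powE.
  apply: Hcost => //.
    by rewrite hI2 hI1 hn powE.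
  by rewrite hI2; apply: leq_trans hkN0 kn.
have hbr := bridge ek k0 kn (leq_trans (isT : (0 < 2)%N) hr2') (_ : (2 * n * r <= expn 2 r)%N)
   hp2 Hval Hc Hread.
have hbr' := hbr (ltac:(by rewrite hn)).
set q := (n - M * expn k (c - 1) * r)%N in hbr'.
have hq : (n <= 2 * q)%N by move: hp3; rewrite -hn /q; lia.
have hfin := final_nat hp4 hq (leq_subr _ _) k0 hbr'.
have kR : (0 < INR k)%R by apply: lt_0_INR; apply/ltP.
have i2 : INR 2 = 2%R by simpl; ring.
have l2 : (ln 2 < 1)%R.
  rewrite -[X in (_ < X)%R](ln_exp 1); apply: ln_increasing; first lra.
  have := exp_ineq1 1 R1_neq_R0; lra.
have l2p : (0 < ln 2)%R by rewrite -ln_1; apply: ln_increasing; lra.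
have lk : (48 < ln (INR k))%R.
  rewrite -(ln_exp 48); apply: ln_increasing; first exact: exp_pos.
  apply: Rlt_le_trans hkL _; apply: le_INR; apply/leP; exact: hkL'.
have hR : (INR n * ln (INR k) <= INR (16 * n + 8 * B) * ln 2)%R.
  have h := le_INR _ _ (elimT leP hfin).
  rewrite -!powE !pow_INR i2 in h.
  have := ln_le' (pow_lt _ _ kR) h.
  by rewrite !ln_pow //; lra.
have i16 : INR 16 = 16%R by simpl; ring.
have i8 : INR 8 = 8%R by simpl; ring.
rewrite -plusE -!multE plus_INR !mult_INR i16 i8 in hR.
have lnn : ln (INR n) = (INR c * ln (INR k))%R by rewrite hn -powE pow_INR ln_pow.
have xe : x = (INR n * ln (INR k) / 16)%R.
  rewrite /x lnn; field; lra.
have BR : (0 <= INR B)%R by apply: pos_INR.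
have h1 : ((16 * INR n + 8 * INR B) * ln 2 < 16 * INR n + 8 * INR B)%R.
  rewrite -{2}(Rmult_1_r (16 * INR n + 8 * INR B)).
  apply: Rmult_lt_compat_l => //; lra.
have h2 : (INR n * 48 <= INR n * ln (INR k))%R.
  apply: Rmult_le_compat_l; lra.
rewrite xe in hB2.
lra.
Qed.
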